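(* There exists no ideal test, i.e., no test that is ideal with respect to the set $F$ of all forecasting strategies.
   Context: Let $\Omega=\{0,1\}$, $\Omega^\infty$ the set of infinite sequences $\omega=(\omega_1,\omega_2,\dots)$, and $\omega^t=(\omega_1,\dots,\omega_t)$ (also used for the cylinder set of all sequences with this prefix; $\omega^0=\emptyset$). $\mathcal G_t$ is the $\sigma$-algebra generated by the length-$t$ cylinders and $\mathcal G_\infty$ the $\sigma$-algebra generated by all cylinders. $\Delta(\Omega)$ is the set of probability distributions on $\Omega$; for $p\in\Delta(\Omega)$ and $x\in\Omega$, $p[x]$ is the probability of $x$. A forecasting strategy is a map $f:\bigcup_{t\ge0}(\Omega\times\Delta(\Omega)\times\Delta(\Omega))^t\to\Delta(\Omega)$; $F$ is the set of all forecasting strategies. Given an ordered pair $\vec f=(f,g)\in F\times F$ and $\omega\in\Omega^\infty$, the play path $(\omega,\vec f)$ is defined recursively: $(\omega,\vec f)^0=\emptyset$ and its $t$-th entry is $(\omega_t,f((\omega,\vec f)^{t-1}),g((\omega,\vec f)^{t-1}))$. The pair $\vec f$ induces two probability measures on $(\Omega^\infty,\mathcal G_\infty)$, again denoted $f$ and $g$, determined by $f(\omega^t)=\prod_{n=1}^t f((\omega,\vec f)^{n-1})[\omega_n]$ and $g(\omega^t)=\prod_{n=1}^t g((\omega,\vec f)^{n-1})[\omega_n]$. A (cardinal comparison) test is a sequence $T=(T_t)_{t>0}$ of $\mathcal G_t$-measurable functions $T_t:(\Omega\times\Delta(\Omega)\times\Delta(\Omega))^\infty\to[0,1]$; write $T_t(\omega,\vec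 f)=T_t((\omega,\vec f))$. Let $A^{\vec f}_{T,f}=\{\omega: T_t(\omega,\vec f)\to1\}$ and $A^{\vec f}_{T,g}=\{\omega: T_t(\omega,\vec f)\to0\}$. A test $T$ is ideal with respect to $A\subseteq F$ if for all $f,g\in A$ with $g\ne f$, writing $\vec f=(f,g)$, $f(A^{\vec f}_{T,f})=g(A^{\vec f}_{T,g})=1$ (measures induced by $\vec f$). $T$ is ideal if it is ideal with respect to $F$. *)

(* Defs.v *)
From Stdlib Require Import Reals List.
Import ListNotations.
Open Scope R_scope.

(** Omega = {0,1} is [bool] (true = 1). *)

(** Delta(Omega): probability distributions on {0,1}, given by the
    probability assigned to [true]. *)
Record Dist : Type := mkDist {
  p1 : R;
  p1_nonneg : 0 <= p1;
  p1_le1 : p1 <= 1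
}.

Definition prob (p : Dist) (x : bool) : R := if x then p1 p else 1 - p1 p.

Definition History : Type := list (bool * Dist * Dist).

Definition Strategy : Type := History -> Dist.

(** infinite sequences omega = (omega_1, omega_2, ...) encoded with
    omega_{n+1} = w n. *)
Definition Seq : Type := nat -> bool.

Fixpoint play (f g : Strategy) (w : Seq) (t : nat) : History :=
  match t with
  | O => []
  | S n => play f g w n ++ [(w n, f (play f g w n), g (play f g w n))]
  end.

(** Probability, under the measure induced by strategy [h] in the play of
    the pair (f,g), of the cylinder omega^t:
    prod_{n=1}^t h((omega,(f,g))^{n-1})[omega_n]. *)
Fixpoint cyl_prob (h f g : Strategy) (w : Seq) (t : nat) : R :=
  match t with
  | O => 1
  | S n => cyl_prob h f g w n * prob (h (play f g w n)) (w n)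
  end.

(** [N] is a null set for the measure induced by [h] (in the play of (f,g)):
    its outer measure (Caratheodory extension from cylinders) is zero, i.e.
    for every eps > 0 it is covered by countably many cylinders of total
    probability at most eps. *)
Definition null_set (h f g : Strategy) (N : Seq -> Prop) : Prop :=
  forall eps : R, 0 < eps ->
  exists (c : nat -> Seq) (len : nat -> nat),
    (forall w, N w -> exists k, forall i, (i < len k)%nat -> w i = c k i) /\
    (forall n, sum_f_R0 (fun k => cyl_prob h f g (c k) (len k)) n <= eps).

(** A test: T t is the t-th function; being G_t-measurable, it is a function
    of the length-t prefix of the play path, with values in [0,1]. *)
Definition Test : Type := nat -> History -> R.

Definition is_test (T : Test) : Prop :=
  forall t h, 0 <= T t h <= 1.

Definition Tval (T : Test) (f g : Strategy) (w : Seq) (t : nat) : R :=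
  T t (play f g w t).

Definition A_f (T : Test) (f g : Strategy) (w : Seq) : Prop :=
  Un_cv (Tval T f g w) 1.
Definition A_g (T : Test) (f g : Strategy) (w : Seq) : Prop :=
  Un_cv (Tval T f g w) 0.

(** T is ideal w.r.t. the set of all strategies:
    f(A_f) = 1 and g(A_g) = 1, i.e. the complements are null. *)
Definition ideal (T : Test) : Prop :=
  forall f g : Strategy, g <> f ->
    null_set f f g (fun w => ~ A_f T f g w) /\
    null_set g f g (fun w => ~ A_g T f g w).

(* Main.v *)
Require Import Defs.
From Stdlib Require Import Reals List Lra Lia Classical.
Import ListNotations.
Open Scope R_scope.

Definition dOne : Dist := mkDist 1 ltac:(lra) ltac:(lra).
Definition dZero : Dist := mkDist 0 ltac:(lra) ltac:(lra).

Definition fS : Strategy := fun _ => dOne.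
Definition gS : Strategy := fun h => match h with [] => dOne | (_, d, _) :: _ => d end.

Lemma play_head (w : Seq) n : exists rest,
  play fS gS w (S n) = (w 0%nat, dOne, dOne) :: rest.
Proof.
  induction n as [|n [rest IH]].
  - exists []. reflexivity.
  - exists (rest ++ [(w (S n), fS (play fS gS w (S n)), gS (play fS gS w (S n)))]).
    change (play fS gS w (S (S n))) with
      (play fS gS w (S n) ++ [(w (S n), fS (play fS gS w (S n)), gS (play fS gS w (S n)))]).
    rewrite IH. reflexivity.
Qed.

Lemma g_play w n : gS (play fS gS w n) = dOne.
Proof.
  destruct n as [|n]; [reflexivity|].
  destruct (play_head w n) as [rest ->]. reflexivity.
Qed.

Lemma cyl_one (h : Strategy) (c : Seq) (len : nat) :
  (forall n, h (play fS gS c n) = dOne) ->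
  (forall i, (i < len)%nat -> c i = true) ->
  cyl_prob h fS gS c len = 1.
Proof.
  intros Hh Hc. induction len as [|n IH]; simpl; [reflexivity|].
  rewrite IH by (intros; apply Hc; lia).
  rewrite Hh, Hc by lia. simpl. ring.
Qed.

Lemma cyl_nonneg h c t : 0 <= cyl_prob h fS gS c t.
Proof.
  induction t; simpl; [lra|].
  apply Rmult_le_pos; auto.
  unfold prob; destruct (c t); destruct (h (play fS gS c t)); simpl; lra.
Qed.

Lemma sum_ge (a : nat -> R) n : (forall k, 0 <= a k) -> a n <= sum_f_R0 a n.
Proof.
  intros H. destruct n; simpl; [lra|].
  assert (0 <= sum_f_R0 a n).
  { induction n; simpl; [apply H|]. pose proof (H (S n)); lra. }
  lra.
Qed.

Lemma contra (h : Strategy) (N : Seq -> Prop) :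
  (forall n, h (play fS gS (fun _ => true) n) = dOne) ->
  (forall c n, h (play fS gS c n) = dOne) ->
  N (fun _ => true) -> ~ null_set h fS gS N.
Proof.
  intros _ Hh HN Hnull.
  destruct (Hnull (1/2)) as [c [len [Hcov Hsum]]]; [lra|].
  destruct (Hcov _ HN) as [k Hk].
  pose proof (cyl_one h (c k) (len k) (Hh (c k)) (fun i Hi => eq_sym (Hk i Hi))) as E.
  pose proof (sum_ge (fun k => cyl_prob h fS gS (c k) (len k)) k
               (fun k => cyl_nonneg h (c k) (len k))) as G.
  specialize (Hsum k). simpl in G. lra.
Qed.

Theorem mainTheorem11 : ~ (exists T : Test, is_test T /\ ideal T).
Proof.
  intros [T [_ HT]].
  assert (Hne : gS <> fS).
  { intros E. assert (E2 := f_equal (fun s => p1 (s [(true, dZero, dZero)])) E).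
    simpl in E2. lra. }
  destruct (HT fS gS Hne) as [H1 H2].
  destruct (classic (A_f T fS gS (fun _ => true))) as [Ha|Ha].
  - assert (~ A_g T fS gS (fun _ => true)) as Hb.
    { intros Hb. pose proof (UL_sequence _ _ _ Ha Hb). lra. }
    exact (contra gS _ (g_play _) g_play Hb H2).
  - exact (contra fS _ (fun _ => eq_refl) (fun _ _ => eq_refl) Ha H1).
Qed.
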